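(* Let $\Gamma\Rightarrow F$ be a binary tautological $\to$-sequent, and let $\Delta$ be the result of deleting from $\Gamma$ all irrelevant formulas of $\Gamma\Rightarrow F$. Then the sequent $\Delta\Rightarrow F$ is also tautological (and binary).
   Context: $\to$-formulas are built from propositional atoms with binary $\to$; a $\to$-sequent is $\Gamma\Rightarrow F$ with $\Gamma$ a finite multiset of $\to$-formulas and $F$ a $\to$-formula. A sequent $E_1,\dots,E_n\Rightarrow F$ is identified with the classical formula $E_1\wedge\dots\wedge E_n\to F$ for the purposes of being true (under a truth assignment), tautological, or binary; binary means no atom occurs more than twice. The head of a $\to$-formula is defined by: an atom is its own head; the head of $E\to F$ is the head of $F$. For a binary sequent $\Gamma\Rightarrow F$, the relevant formulas are the elements of the smallest set $S$ such that (1) every formula of $\Gamma$ whose head occurs in $F$ is in $S$, and (2) every formula of $\Gamma$ whose head occurs in some element of $S$ is in $S$. Formulas of $\Gamma$ that are not relevant are irrelevant. *)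

(* Defs.v *)
From Stdlib Require Import List Arith Bool ClassicalEpsilon.
Import ListNotations.

Inductive form : Type :=
| Atom : nat -> form
| Imp : form -> form -> form.

Fixpoint eval (v : nat -> bool) (A : form) : bool :=
  match A with
  | Atom p => v p
  | Imp A B => implb (eval v A) (eval v B)
  end.

(* a sequent: antecedent multiset (as a list) and succedent *)
Definition seq_true (v : nat -> bool) (G : list form) (F : form) : Prop :=
  (forall E, In E G -> eval v E = true) -> eval v F = true.

Definition tautological (G : list form) (F : form) : Prop :=
  forall v, seq_true v G F.

Fixpoint atoms (A : form) : list nat :=
  match A with
  | Atom p => [p]
  | Imp A B => atoms A ++ atoms B
  end.

Definition seq_atoms (G : list form) (F : form) : list nat :=
  flat_map atoms G ++ atoms F.

Definition binary (G : list form) (F : form) : Prop :=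
  forall p, count_occ Nat.eq_dec (seq_atoms G F) p <= 2.

Fixpoint head (A : form) : nat :=
  match A with
  | Atom p => p
  | Imp _ B => head B
  end.

Definition occurs (p : nat) (A : form) : Prop := In p (atoms A).

Inductive relevant (G : list form) (F : form) : form -> Prop :=
| rel_base : forall E, In E G -> occurs (head E) F -> relevant G F E
| rel_step : forall E E', In E G -> relevant G F E' -> occurs (head E) E' ->
    relevant G F E.

Definition relevantb (G : list form) (F : form) (E : form) : bool :=
  if excluded_middle_informative (relevant G F E) then true else false.

Definition delete_irrelevant (G : list form) (F : form) : list form :=
  filter (relevantb G F) G.

(* Main.v *)
Require Import Defs.
From Stdlib Require Import List Arith Bool ClassicalEpsilon Lia.
Import ListNotations.

Lemma relevantb_spec G F E : relevantb G F E = true <-> relevant G F E.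
Proof.
  unfold relevantb; destruct (excluded_middle_informative _); split; congruence || tauto.
Qed.

Lemma in_del G F E : In E (delete_irrelevant G F) <-> In E G /\ relevant G F E.
Proof.
  unfold delete_irrelevant; rewrite filter_In, relevantb_spec; tauto.
Qed.

Lemma eval_agree v v' E : (forall p, In p (atoms E) -> v' p = v p) -> eval v' E = eval v E.
Proof.
  induction E; simpl; intros H.
  - apply H; auto.
  - rewrite IHE1, IHE2; auto; intros; apply H; apply in_or_app; auto.
Qed.

Lemma eval_head v E : v (Defs.head E) = true -> eval v E = true.
Proof.
  induction E; simpl; intros H; auto.
  rewrite IHE2; auto; destruct (eval v E1); auto.
Qed.

Lemma count_filter (f : form -> bool) G p :
  count_occ Nat.eq_dec (flat_map atoms (filter f G)) p <=
  count_occ Nat.eq_dec (flat_map atoms G) p.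
Proof.
  induction G; simpl; auto.
  destruct (f a); simpl; rewrite !count_occ_app; lia.
Qed.

Theorem lemma4p1 (G : list form) (F : form) :
  binary G F -> tautological G F ->
  tautological (delete_irrelevant G F) F /\ binary (delete_irrelevant G F) F.
Proof.
  intros Hb Ht; split.
  - intros v Hv.
    set (A := flat_map atoms (delete_irrelevant G F) ++ atoms F).
    set (v' := fun p => if in_dec Nat.eq_dec p A then v p else true).
    assert (Hag : forall E, (forall p, In p (atoms E) -> In p A) -> eval v' E = eval v E).
    { intros E HE; apply eval_agree; intros p Hp; unfold v';
      destruct (in_dec Nat.eq_dec p A); [reflexivity | exfalso; auto]. }
    assert (HF : eval v' F = eval v F).
    { apply Hag; intros; unfold A; apply in_or_app; auto. }
    rewrite <- HF. apply Ht.
    intros E HE.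
    destruct (excluded_middle_informative (relevant G F E)) as [Hr|Hr].
    + assert (Hin : In E (delete_irrelevant G F)) by (apply in_del; auto).
      rewrite Hag. apply Hv; auto.
      intros p Hp; unfold A; apply in_or_app; left; apply in_flat_map; eauto.
    + apply eval_head. unfold v'.
      destruct (in_dec Nat.eq_dec (Defs.head E) A) as [Hi|Hi]; auto.
      exfalso; apply Hr. unfold A in Hi; apply in_app_or in Hi as [Hi|Hi].
      * apply in_flat_map in Hi as [E' [HE' Hp]].
        apply in_del in HE' as [_ HE'].
        eapply rel_step; eauto.
      * apply rel_base; auto.
  - intros p. specialize (Hb p). unfold seq_atoms in *.
    rewrite count_occ_app in *. unfold delete_irrelevant.
    pose proof (count_filter (relevantb G F) G p). lia.
Qed.
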